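(* For every planar forest $F$, $\Delta(F)=\sum_{I}I\otimes(F-I)$, where the sum runs over all biideals $I$ of $F$ (including $I=\emptyset$ and $I$ equal to the whole vertex set).
   Context: Planar rooted trees have their children linearly ordered left to right; a planar forest is a finite, possibly empty, sequence of planar rooted trees ($1$ = empty forest); $\mathcal{H}$ is the free associative unital algebra over a field $K$ on planar rooted trees, with basis the planar forests and product concatenation. $B^+(F)$ is the tree obtained by grafting the trees of $F$ (in order) on a new common root; $\varepsilon(F)=\delta_{F,1}$. $\Delta:\mathcal{H}\to\mathcal{H}\otimes\mathcal{H}$ is the unique linear map with $\Delta(1)=1\otimes1$, $\Delta(xy)=(x\otimes1)\Delta(y)+\Delta(x)(1\otimes y)-x\otimes y$ and $\Delta(B^+(x))=B^+(x)\otimes 1+(\mathrm{Id}\otimes B^+)\Delta(x)$. Orders on vertices of a nonempty forest $F=t_1\cdots t_n$: $s\geq_{high}s'$ iff $s'=s$ or $s'$ is an ancestor of $s$. If $s,s'$ are incomparable for $\geq_{high}$, $s\geq_{left}s'$ iff either $s\in t_i$, $s'\in t_j$ with $i<j$, or $s,s'\in t_i$ and $s\geq_{left}s'$ in the forest obtained from $t_i$ by deleting its root (recursively). A set $I$ of vertices of $F$ is a biideal if for all vertices $s,s'$: ($s\in I$ and $s'\geq_{high}s$) implies $s'\in I$, and ($s\in I$ and $s'\geq_{left}s$) implies $s'\in I$. For such $I$, $I$ also denotes the planar forest formed by the vertices of $I$ with induced edges and left-right order, and $F-I$ the planar forest formed by the remaining vertices. *)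

(* Defs.v *)
From HB Require Import structures.
From mathcomp Require Import all_boot all_algebra.
From mathcomp Require Import finmap monalg.

Set Implicit Arguments.
Unset Strict Implicit.
Unset Printing Implicit Defensive.

Import GRing.Theory.
Local Open Scope ring_scope.

Inductive tree : Type := Node of seq tree.

Definition children (t : tree) : seq tree := let: Node c := t in c.

Fixpoint tree_enc (t : tree) : GenTree.tree unit :=
  let: Node c := t in GenTree.Node 0 (map tree_enc c).

Fixpoint tree_dec (g : GenTree.tree unit) : tree :=
  match g with
  | GenTree.Leaf _ => Node [::]
  | GenTree.Node _ l => Node (map tree_dec l)
  end.

Lemma tree_encK : cancel tree_enc tree_dec.
Proof.
rewrite /cancel; fix IH 1; case=> c /=; congr Node.
elim: c => [|u c IHc] //=; by rewrite IH IHc.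
Qed.

HB.instance Definition _ := Countable.copy tree (can_type tree_encK).

Definition forest := seq tree.
HB.instance Definition _ := Countable.on forest.

Lemma forest_unitm (x y : forest) : x ++ y = [::] -> x = [::] /\ y = [::].
Proof. by case: x; case: y. Qed.

HB.instance Definition _ := Choice_isMonomialDef.Build forest
  (@catA tree) (@cat0s tree) (@cats0 tree) forest_unitm.

(* Basis of H (x) H : pairs of planar forests, multiplied componentwise. *)
Definition pforest := (forest * forest)%type.
HB.instance Definition _ := Countable.on pforest.

Definition pf_one : pforest := ([::], [::]).
Definition pf_mul (x y : pforest) : pforest := (x.1 ++ y.1, x.2 ++ y.2).

Lemma pf_mulA : associative pf_mul.
Proof. by case=> [a b] [c d] [e f]; rewrite /pf_mul /= !catA. Qed.
Lemma pf_mul1 : left_id pf_one pf_mul.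
Proof. by case. Qed.
Lemma pf_mul1r : right_id pf_one pf_mul.
Proof. by case=> a b; rewrite /pf_mul /= !cats0. Qed.
Lemma pf_unitm (x y : pforest) : pf_mul x y = pf_one -> x = pf_one /\ y = pf_one.
Proof.
by case: x y => [[|? ?] [|? ?]] [[|? ?] [|? ?]].
Qed.

HB.instance Definition _ := Choice_isMonomialDef.Build pforest
  pf_mulA pf_mul1 pf_mul1r pf_unitm.

(* The algebra H (free associative algebra on planar trees, basis the  *)
(* planar forests, product = concatenation) and H (x) H (basis the     *)
(* pairs of planar forests, product componentwise).                    *)
Definition H (K : fieldType) := {malg K[forest]}.
Definition HH (K : fieldType) := {malg K[pforest]}.

Definition tens (K : fieldType) (x y : H K) : HH K :=
  \sum_(k <- msupp x) \sum_(l <- msupp y)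
     (x@_k * y@_l) *: << ((k, l) : pforest) >>.

Definition Bplus_f (F : forest) : forest := [:: Node F].

Definition Bplus (K : fieldType) (x : H K) : H K :=
  \sum_(k <- msupp x) x@_k *: << Bplus_f k >>.

Definition IdBplus (K : fieldType) (u : HH K) : HH K :=
  \sum_(k <- msupp u) u@_k *: << ((k.1, Bplus_f k.2) : pforest) >>.

(* Vertices of a planar forest F = t_0 ... t_(n-1) are addressed by    *)
(* nonempty sequences of indices: [:: i] is the root of t_i, and       *)
(* i :: p is the vertex with address p in the forest of children of    *)
(* t_i (p = [:: j] being the j-th child of the root of t_i, etc.).     *)

Fixpoint tverts (t : tree) : seq (seq nat) :=
  let: Node c := t in
  [::] :: (fix fv (i : nat) (l : seq tree) : seq (seq nat) :=
             match l with
             | [::] => [::]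
             | u :: l' => [seq i :: p | p <- tverts u] ++ fv i.+1 l'
             end) 0 c.

Definition fverts (F : forest) : seq (seq nat) := behead (tverts (Node F)).

(* s >=_high s'  iff  s' = s or s' is an ancestor of s *)
Definition ge_high (s s' : seq nat) : bool := prefix s' s.

Fixpoint lex_left (s s' : seq nat) : bool :=
  match s, s' with
  | i :: p, j :: q => (i < j)%N || ((i == j) && lex_left p q)
  | _, _ => false
  end.

Definition ge_left (s s' : seq nat) : bool :=
  [&& ~~ ge_high s s', ~~ ge_high s' s & lex_left s s'].

Definition is_biideal (F : forest) (I : pred (seq nat)) : bool :=
  all (fun s => all (fun s' =>
        (I s && ge_high s' s ==> I s') && (I s && ge_left s' s ==> I s'))
      (fverts F)) (fverts F).

(* The planar forest formed by the vertices (addresses) satisfying P,   *)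
(* with induced edges and left-right order. [a] is the address of t.   *)
Fixpoint trestr (P : pred (seq nat)) (a : seq nat) (t : tree) : forest :=
  let: Node c := t in
  let sub := (fix fr (i : nat) (l : seq tree) : forest :=
                match l with
                | [::] => [::]
                | u :: l' => trestr P (rcons a i) u ++ fr i.+1 l'
                end) 0 c in
  if P a then [:: Node sub] else sub.

Definition frestr (F : forest) (P : pred (seq nat)) : forest :=
  trestr (fun s => (s != [::]) && P s) [::] (Node F).

Definition vset (F : forest) (S : {set 'I_(size (fverts F))}) : pred (seq nat) :=
  fun s => s \in [seq nth [::] (fverts F) (val i) | i in S].
Arguments vset : clear implicits.

(* Main.v *)
Require Import Defs.
From HB Require Import structures.
From mathcomp Require Import all_boot all_algebra.
From mathcomp Require Import finmap monalg.
Import GRing.Theory.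

Lemma forest_ind (P : forest -> Prop) : P [::] ->
  (forall c F', P c -> P F' -> P (Node c :: F')) -> forall F, P F.
Proof.
move=> H0 HS.
have Ht : forall t F, P F -> P (t :: F).
  fix IH 1; case=> c F PF; apply: HS => //.
  elim: c => [|u c IHc] //; exact: IH.
by elim=> // t F; apply: Ht.
Qed.

Fixpoint frr (P : pred (seq nat)) (a : seq nat) (i : nat) (l : forest) : forest :=
  match l with [::] => [::] | u :: l' => trestr P (rcons a i) u ++ frr P a i.+1 l' end.

Lemma frr_cons P a i u l : frr P a i (u :: l) = trestr P (rcons a i) u ++ frr P a i.+1 l.
Proof. by []. Qed.

Lemma trestrE P a c : trestr P a (Node c) =
  if P a then [:: Node (frr P a 0 c)] else frr P a 0 c.
Proof.
rewrite /= (_ : 0%R = 0%N) //; case: (P a); [congr [:: Node _]|].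
all: elim: c 0%N => //= u c IH i; by rewrite IH.
Qed.

Fixpoint fvs (i : nat) (l : forest) : seq (seq nat) :=
  match l with [::] => [::] | u :: l' => [seq i :: p | p <- tverts u] ++ fvs i.+1 l' end.

Lemma tvertsE c : tverts (Node c) = [::] :: fvs 0 c.
Proof. rewrite /= (_ : 0%R = 0%N) //; congr (_ :: _); elim: c 0%N => //= u c IH i; by rewrite IH. Qed.

Lemma fvertsE F : fverts F = fvs 0 F.
Proof. by rewrite /fverts tvertsE. Qed.

Definition shift1 (s : seq nat) : seq nat := if s is j :: p then j.+1 :: p else [::].
Arguments shift1 !s /.

Lemma shift1_inj : injective shift1.
Proof. by case=> [|i p] [|j q] //= [-> ->]. Qed.

Lemma fvs_shift i l : fvs i.+1 l = map shift1 (fvs i l).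
Proof.
elim: l i => //= u l IH i; rewrite IH map_cat -map_comp; congr (_ ++ _).
Qed.

Lemma fverts_cons c F' : fverts (Node c :: F') =
  map (cons 0%N) ([::] :: fverts c) ++ map shift1 (fverts F').
Proof. by rewrite !fvertsE -tvertsE /= fvs_shift. Qed.

Lemma fverts_ne F s : s \in fverts F -> s != [::].
Proof.
rewrite fvertsE; elim: F 0%N => //= u l IH i; rewrite mem_cat => /orP[/mapP[p _ ->]//|].
exact: IH.
Qed.

Lemma frr_ext F : forall P Q a b i j,
  (forall k s, P (rcons a (i + k) ++ s) = Q (rcons b (j + k) ++ s)) ->
  frr P a i F = frr Q b j F.
Proof.
elim/forest_ind: F => // c F' IHc IHF P Q a b i j H.
rewrite !frr_cons !trestrE.
have -> : P (rcons a i) = Q (rcons b j) by have := H 0%N [::]; rewrite !addn0 !cats0.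
have -> : frr P (rcons a i) 0 c = frr Q (rcons b j) 0 c.
  apply: IHc => k s; have := H 0%N (k :: s); rewrite !addn0 !add0n !cat_rcons; exact.
have -> // : frr P a i.+1 F' = frr Q b j.+1 F'.
apply: IHF => k s; have := H k.+1 s; by rewrite !addnS.
Qed.

Lemma frestrE F P : frestr F P = frr (fun s => (s != [::]) && P s) [::] 0 F.
Proof. by rewrite /frestr trestrE. Qed.

Lemma frestr_ext_ne F P Q : (forall s, s != [::] -> P s = Q s) ->
  frestr F P = frestr F Q.
Proof. move=> H; rewrite !frestrE; apply: frr_ext => k s /=; by rewrite H. Qed.

Lemma frestr_cons c F' P : frestr (Node c :: F') P =
  (if P [:: 0%N] then [:: Node (frestr c (fun p => P (0%N :: p)))]
   else frestr c (fun p => P (0%N :: p))) ++ frestr F' (fun p => P (shift1 p)).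
Proof.
rewrite frestrE frr_cons trestrE /= !frestrE; congr (_ ++ _).
  have -> : frr (fun s => (s != [::]) && P s) [:: 0%N] 0 c =
            frr (fun s => (s != [::]) && P (0%N :: s)) [::] 0 c.
    by apply: frr_ext => k s.
  by [].
by apply: frr_ext => k s.
Qed.

Lemma frestr_nil P : frestr [::] P = [::].
Proof. by []. Qed.

Definition cond (P : pred (seq nat)) (s s' : seq nat) : bool :=
  (P s && ge_high s' s ==> P s') && (P s && ge_left s' s ==> P s').
Definition bi (V : seq (seq nat)) (P : pred (seq nat)) : bool :=
  all (fun s => all (cond P s) V) V.
Lemma is_biidealE F P : is_biideal F P = bi (fverts F) P.
Proof. by []. Qed.

Lemma all_and (T : Type) (a b : pred T) l :
  all (fun x => a x && b x) l = all a l && all b l.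
Proof. by elim: l => //= x l ->; rewrite andbACA. Qed.

Lemma bi_cat X Y P : bi (X ++ Y) P =
  [&& bi X P, bi Y P, all (fun s => all (cond P s) Y) X &
      all (fun s => all (cond P s) X) Y].
Proof.
rewrite /bi all_cat !(eq_all (fun s => all_cat (cond P s) X Y)) !all_and.
by case: (all _ X); case: (all _ X); case: (all _ Y); case: (all _ Y).
Qed.

Lemma bi_map f V P :
  (forall s s', ge_high (f s) (f s') = ge_high s s') ->
  (forall s s', ge_left (f s) (f s') = ge_left s s') ->
  bi (map f V) P = bi V (fun s => P (f s)).
Proof.
move=> Hh Hl; rewrite /bi all_map; apply: eq_all => s /=; rewrite all_map.
by apply: eq_all => s'; rewrite /cond /= Hh Hl.
Qed.

Lemma gh_cons0 a b : ge_high (0%N :: a) (0%N :: b) = ge_high a b.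
Proof. by rewrite /ge_high prefix_cons eqxx. Qed.
Lemma gl_cons0 a b : ge_left (0%N :: a) (0%N :: b) = ge_left a b.
Proof. by rewrite /ge_left !gh_cons0. Qed.
Lemma gh_shift a b : ge_high (shift1 a) (shift1 b) = ge_high a b.
Proof. rewrite /ge_high /shift1; case: a b => [|i a] [|j b] //=. Qed.
Lemma gl_shift a b : ge_left (shift1 a) (shift1 b) = ge_left a b.
Proof.
rewrite /ge_left !gh_shift; congr [&& _, _ & _].
by case: a b => [|i a] [|j b].
Qed.

Lemma all_implyb (T : Type) (b : bool) (a : pred T) l :
  all (fun x => b ==> a x) l = b ==> all a l.
Proof. elim: l => [|x l IH] /=; [by case: (b)|]; rewrite IH; by case: (b). Qed.

Lemma all_all_implyb (T U : Type) (a : pred T) (b : pred U) Y W :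
  all (fun y => all (fun w => a y ==> b w) W) Y = has a Y ==> all b W.
Proof.
elim: Y => //= y Y IH; rewrite all_implyb IH.
by case: (a y); case: (has a Y); case: (all b W).
Qed.

Lemma cond_refl P s : cond P s s.
Proof. by rewrite /cond; apply/andP; split; apply/implyP => /andP[]. Qed.

Lemma cond_shift0 P y w : cond P (shift1 y) (0%N :: w) = P (shift1 y) ==> P (0%N :: w).
Proof.
case: y => [|j y]; rewrite /cond /ge_left /ge_high /=.
  by rewrite andbT andbF /= andbT.
by rewrite andbF andbT.
Qed.

Lemma bi_cons c F' P : bi (fverts (Node c :: F')) P =
 [&& P [:: 0%N] ==> all (fun p => P (0%N :: p)) (fverts c),
     bi (fverts c) (fun p => P (0%N :: p)),
     bi (fverts F') (fun p => P (shift1 p)) &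
     has (fun p => P (shift1 p)) (fverts F') ==>
        (P [:: 0%N] && all (fun p => P (0%N :: p)) (fverts c))].
Proof.
rewrite fverts_cons bi_cat (bi_map _ _ _ gh_cons0 gl_cons0) (bi_map _ _ _ gh_shift gl_shift).
rewrite -cat1s bi_cat.
set Pt := fun p => P (0%N :: p).
have -> : bi [:: [::]] Pt by rewrite /bi /= cond_refl.
have -> : all (fun s => all (cond Pt s) (fverts c)) [:: [::]] =
          (Pt [::] ==> all Pt (fverts c)).
  rewrite /= andbT -all_implyb; apply: eq_all => s'.
  by rewrite /cond /ge_left /ge_high prefix0s /= andbT andbF implyFb andbT.
have -> : all (fun s => all (cond Pt s) [:: [::]]) (fverts c).
  apply/allP => s _ /=; rewrite andbT.
  case: s => [|i s]; first exact: cond_refl.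
  by rewrite /cond /ge_left /ge_high /= ?andbF.
have -> : all (fun s => all (cond P s) [seq shift1 i | i <- fverts F'])
            [seq 0%N :: i | i <- [:: [::]] ++ fverts c].
  apply/allP => _ /mapP[w _ ->]; apply/allP => _ /mapP[y _ ->].
  by case: y => [|j y]; rewrite /cond /ge_left /ge_high /= ?andbF.
have -> : all (fun s => all (cond P s) [seq 0%N :: i | i <- [:: [::]] ++ fverts c])
            [seq shift1 i | i <- fverts F'] =
          all (fun y => all (fun w => P (shift1 y) ==> Pt w) ([::] :: fverts c)) (fverts F').
  rewrite all_map; apply: eq_all => y; rewrite /preim /= cond_shift0; congr (_ && _).
  by rewrite all_map; apply: eq_all => w /=; rewrite cond_shift0.
rewrite all_all_implyb /= andbT.
by rewrite (andbC (bi _ _)) -!andbA.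
Qed.

Lemma bi_ext_in V P Q : {in V, P =1 Q} -> bi V P = bi V Q.
Proof.
move=> H; apply: eq_in_all => s sV; apply: eq_in_all => s' s'V.
by rewrite /cond !H.
Qed.

Lemma bi_allT V P : all P V -> bi V P.
Proof.
move/allP=> H; apply/allP => s _; apply/allP => s' s'V.
by rewrite /cond (H s' s'V) !implybT.
Qed.

Lemma bi_none V P : ~~ has P V -> bi V P.
Proof.
move/hasPn=> H; apply/allP => s sV; apply/allP => s' _.
by rewrite /cond (negbTE (H s sV)).
Qed.

Lemma frestr_all F : forall P, all P (fverts F) -> frestr F P = F.
Proof.
elim/forest_ind: F => // c F' IHc IHF P.
rewrite frestr_cons fverts_cons all_cat !all_map /= => /andP[/andP[P0 Ac] AF].
rewrite P0 IHc // IHF //.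
Qed.

Lemma frestr_none F : forall P, ~~ has P (fverts F) -> frestr F P = [::].
Proof.
elim/forest_ind: F => // c F' IHc IHF P.
rewrite frestr_cons fverts_cons has_cat !has_map /= !negb_or => /andP[/andP[P0 Ac] AF].
by rewrite (negbTE P0) IHc // IHF.
Qed.

Lemma uniq_fverts F : uniq (fverts F).
Proof.
elim/forest_ind: F => // c F' IHc IHF.
have i0 : injective (cons 0%N) by move=> x y [].
rewrite fverts_cons cat_uniq (map_inj_uniq i0) (map_inj_uniq shift1_inj).
rewrite /= IHc IHF andbT; apply/andP; split.
  by apply/negP => /fverts_ne.
rewrite andbT; apply/hasPn => _ /mapP[y _ ->]; rewrite inE; apply/negP => /orP[/eqP|/mapP[x _]].
  by case: y.
by case: y.
Qed.

Fixpoint masks (n : nat) : seq bitseq :=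
  if n is n'.+1 then [seq true :: m | m <- masks n'] ++ [seq false :: m | m <- masks n']
  else [:: [::]].

Lemma mem_masks n m : (m \in masks n) = (size m == n).
Proof.
elim: n m => [|n IH] [|b m] //=; rewrite mem_cat.
  by apply/negbTE; rewrite negb_or; apply/andP; split; apply/mapP => [[x]].
apply/idP/idP => [/orP[]/mapP[x + [_ ->]]|]; rewrite ?IH //.
rewrite eqSS -IH => mm; apply/orP; case: b; [left|right]; apply/mapP; by exists m.
Qed.

Lemma uniq_masks n : uniq (masks n).
Proof.
elim: n => //= n IH; rewrite cat_uniq !map_inj_uniq ?IH //; try by move=> x y [].
rewrite andbT; apply/hasPn => _ /mapP[m _ ->]; apply/mapP => [[x _]] //.
Qed.

Definition Pm (V : seq (seq nat)) (m : bitseq) : pred (seq nat) := fun s => s \in mask m V.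

Lemma full_iff V m : uniq V -> size m = size V ->
  all (Pm V m) V = (m == nseq (size V) true).
Proof.
move=> uV sm; apply/idP/eqP => [/allP H|->]; last first.
  by apply/allP => s sV; rewrite /Pm mask_true.
have : size V <= size (mask m V) by apply: uniq_leq_size => // s /H.
rewrite size_mask // => le; have : count id m == size m.
  by rewrite eqn_leq count_size sm le.
rewrite -all_count => /allP am; rewrite -sm; apply/all_pred1P/allP => b /am /= ->.
by [].
Qed.

Lemma nz_iff V m : size m = size V ->
  has (Pm V m) V = (m != nseq (size V) false).
Proof.
move=> sm; apply/idP/idP => [/hasP[s _ sM]|].
  by apply/eqP => em; rewrite /Pm em mask_false in sM.
move=> nz; case E: (mask m V) => [|h t].
  have : ~~ has id m by rewrite has_count -(size_mask sm) E.
  rewrite -all_predC => am; have : all (pred1 false) m.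
    by apply: sub_all am => b /=; case: b.
  by move=> /all_pred1P em; rewrite -sm -em eqxx in nz.
apply/hasP; exists h; last by rewrite /Pm E mem_head.
by apply: (@mem_mask _ _ m); rewrite E mem_head.
Qed.

Section Term.
Variables (c F' : forest) (b : bool) (m0 m2 : bitseq).
Hypotheses (s0 : size m0 = size (fverts c)) (s2 : size m2 = size (fverts F')).
Let P := Pm (fverts (Node c :: F')) (b :: m0 ++ m2).

Lemma PmE s : P s =
  (s \in map (cons 0%N) (mask (b :: m0) ([::] :: fverts c))) ||
  (s \in map shift1 (mask m2 (fverts F'))).
Proof.
rewrite /P /Pm fverts_cons -cat_cons mask_cat; last by rewrite /= size_map /= s0.
by rewrite mem_cat -!map_mask.
Qed.

Lemma PT p : P (0%N :: p) = (b && (p == [::])) || Pm (fverts c) m0 p.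
Proof.
have i0 : injective (cons 0%N) by move=> x y [].
rewrite PmE (mem_map i0) (_ : (0%N :: p \in _) = false) ?orbF.
  by case: b; rewrite /= ?in_cons.
by apply/mapP => [[y _]]; case: y.
Qed.

Lemma PS p : P (shift1 p) = Pm (fverts F') m2 p.
Proof.
rewrite PmE (mem_map shift1_inj) (_ : (shift1 p \in _) = false) //.
by apply/mapP => [[y _]]; case: p.
Qed.

Lemma PT0 : P [:: 0%N] = b.
Proof.
rewrite PT eqxx andbT; case: b => //=; apply/negP => /mem_mask /fverts_ne.
by rewrite eqxx.
Qed.

Lemma frestr_P : frestr (Node c :: F') P =
  (if b then [:: Node (frestr c (Pm (fverts c) m0))] else frestr c (Pm (fverts c) m0))
  ++ frestr F' (Pm (fverts F') m2).
Proof.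
rewrite frestr_cons PT0 (@frestr_ext_ne F' _ (Pm (fverts F') m2)); last by move=> s _; rewrite PS.
rewrite (@frestr_ext_ne c _ (Pm (fverts c) m0)) //.
by move=> s /negbTE ns; rewrite PT ns andbF.
Qed.

Lemma frestr_PC : frestr (Node c :: F') (predC P) =
  (if b then frestr c (predC (Pm (fverts c) m0))
   else [:: Node (frestr c (predC (Pm (fverts c) m0)))])
  ++ frestr F' (predC (Pm (fverts F') m2)).
Proof.
rewrite frestr_cons /= PT0.
rewrite (@frestr_ext_ne F' _ (predC (Pm (fverts F') m2))); last by move=> s _; rewrite /= PS.
rewrite (@frestr_ext_ne c _ (predC (Pm (fverts c) m0))).
  by case: b.
by move=> s /negbTE ns; rewrite /= PT ns andbF.
Qed.

Lemma bi_P : bi (fverts (Node c :: F')) P =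
  [&& b ==> all (Pm (fverts c) m0) (fverts c), bi (fverts c) (Pm (fverts c) m0),
      bi (fverts F') (Pm (fverts F') m2) &
      has (Pm (fverts F') m2) (fverts F') ==> (b && all (Pm (fverts c) m0) (fverts c))].
Proof.
have E : {in fverts c, (fun p => P (0%N :: p)) =1 Pm (fverts c) m0}.
  by move=> s /fverts_ne /negbTE ns; rewrite /= PT ns andbF.
rewrite bi_cons PT0 (eq_in_all E) (@bi_ext_in _ _ _ E).
rewrite (@bi_ext_in (fverts F') _ (Pm (fverts F') m2)); last by move=> s _; rewrite /= PS.
by rewrite (eq_has (a2 := Pm (fverts F') m2)) // => s; rewrite /= PS.
Qed.
End Term.

Fixpoint tfb (t : tree) : seq pforest :=
  let: Node c := t in
  (fix go (l : forest) : seq pforest :=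
     match l with
     | [::] => [:: ([::], [::])]
     | u :: l' => [seq (p.1, Node p.2 :: l') | p <- tfb u] ++ [seq (u :: q.1, q.2) | q <- go l']
     end) c.
Definition fb (F : forest) := tfb (Node F).
Lemma fb0 : fb [::] = [:: ([::], [::])]. Proof. by []. Qed.
Lemma fb_cons c F' : fb (Node c :: F') =
  [seq (p.1, Node p.2 :: F') | p <- fb c] ++ [seq (Node c :: q.1, q.2) | q <- fb F'].
Proof. by []. Qed.

Section Sums.
Local Open Scope ring_scope.
Variable R : zmodType.

Lemma big_masksS n (h : bitseq -> R) : \sum_(m <- masks n.+1) h m =
  \sum_(m <- masks n) h (true :: m) + \sum_(m <- masks n) h (false :: m).
Proof. by rewrite /= big_cat !big_map. Qed.

Lemma big_masks_add a b (h : bitseq -> R) : \sum_(m <- masks (a + b)) h m =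
  \sum_(x <- masks a) \sum_(y <- masks b) h (x ++ y).
Proof.
elim: a h => [|a IH] h; first by rewrite add0n /= big_seq1.
by rewrite addSn !big_masksS !IH.
Qed.

Lemma sum_pick (T : eqType) (r : seq T) j (X : R) : j \in r -> uniq r ->
  \sum_(i <- r) (if i == j then X else 0) = X.
Proof.
move=> jr ur; rewrite (bigD1_seq j) //= eqxx big1 ?addr0 // => i /negbTE ->.
by [].
Qed.

Lemma partB F : forall (g : pforest -> R),
  \sum_(m <- masks (size (fverts F)))
     (if bi (fverts F) (Pm (fverts F) m)
      then g (frestr F (Pm (fverts F) m), frestr F (predC (Pm (fverts F) m))) else 0)
  = \sum_(p <- fb F) g p.
Proof.
elim/forest_ind: F => [|c F' IHc IHF] g.
  by rewrite /= !big_seq1.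
have -> : size (fverts (Node c :: F')) = (size (fverts c)).+1 + size (fverts F').
  by rewrite fverts_cons size_cat !size_map.
rewrite big_masks_add big_masksS addrC fb_cons [X in _ = X]big_cat /= !big_map.
set nc := size (fverts c); set n' := size (fverts F').
have uc := uniq_fverts c.
congr (_ + _).
  transitivity (\sum_(m0 <- masks nc)
     (if bi (fverts c) (Pm (fverts c) m0)
      then g (frestr c (Pm (fverts c) m0),
              Node (frestr c (predC (Pm (fverts c) m0))) :: F') else 0)); last first.
    exact: (IHc (fun p => g (p.1, Node p.2 :: F'))).
  apply: eq_big_seq => m0; rewrite mem_masks => /eqP sm0.
  transitivity (\sum_(m2 <- masks n')
    (if m2 == nseq n' false then
     (if bi (fverts c) (Pm (fverts c) m0)
      then g (frestr c (Pm (fverts c) m0),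
              Node (frestr c (predC (Pm (fverts c) m0))) :: F') else 0) else 0)); last first.
    by rewrite sum_pick ?uniq_masks // mem_masks size_nseq.
  apply: eq_big_seq => m2; rewrite mem_masks => /eqP sm2.
  rewrite (bi_P _ _ false _ m2 sm0) (frestr_P _ _ false _ m2 sm0)
          (frestr_PC _ _ false _ m2 sm0) (@nz_iff _ _ sm2).
  case: eqP => [->|ne]; last by rewrite /= !andbF.
  have nh : ~~ has (Pm (fverts F') (nseq n' false)) (fverts F').
    by rewrite nz_iff ?size_nseq // eqxx.
  rewrite /= (bi_none _ _ nh) (frestr_none F') // (frestr_all F') ?all_predC // cats0.
  by rewrite !andbT.
transitivity (\sum_(m2 <- masks n')
     (if bi (fverts F') (Pm (fverts F') m2)
      then g (Node c :: frestr F' (Pm (fverts F') m2),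
              frestr F' (predC (Pm (fverts F') m2))) else 0)); last first.
  exact: (IHF (fun p => g (Node c :: p.1, p.2))).
have fullN : all (Pm (fverts c) (nseq nc true)) (fverts c).
  by rewrite full_iff ?size_nseq // eqxx.
transitivity (\sum_(m0 <- masks nc) (if m0 == nseq nc true then
   \sum_(m2 <- masks n')
     (if bi (fverts F') (Pm (fverts F') m2)
      then g (Node c :: frestr F' (Pm (fverts F') m2),
              frestr F' (predC (Pm (fverts F') m2))) else 0) else 0)); last first.
  by rewrite sum_pick ?uniq_masks // mem_masks size_nseq.
apply: eq_big_seq => m0; rewrite mem_masks => /eqP sm0.
case: eqP => [em0|ne].
  apply: eq_big_seq => m2; rewrite mem_masks => /eqP sm2.
  rewrite (bi_P _ _ true _ m2 sm0) (frestr_P _ _ true _ m2 sm0)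
          (frestr_PC _ _ true _ m2 sm0) em0 fullN (bi_allT _ _ fullN) /=.
  rewrite (frestr_all c) // (frestr_none c) ?has_predC ?fullN //=.
  by rewrite implybT andbT.
apply: big1_seq => m2; rewrite mem_masks => /andP[_ /eqP sm2].
rewrite (bi_P _ _ true _ m2 sm0) (@full_iff _ _ uc sm0).
by move/eqP/negbTE: ne => ->.
Qed.
End Sums.

Lemma mem_mask_nth (T : eqType) (x0 : T) (m : bitseq) V s : size m = size V ->
  (s \in mask m V) = has (fun i => nth false m i && (nth x0 V i == s)) (iota 0 (size V)).
Proof.
elim: V m => [|v V IH] [|b m] //= [sm].
rewrite -add1n iotaDl has_map -/(iota 1 _).
rewrite (eq_has (a2 := fun i => nth false m i && (nth x0 V i == s))) // -IH //.
by case: b; rewrite /= ?in_cons // eq_sym.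
Qed.

Lemma vset_mask F (m : bitseq) : size m = size (fverts F) ->
  vset F [set i : 'I_(size (fverts F)) | nth false m i] =1 Pm (fverts F) m.
Proof.
move=> sm s; rewrite /vset /Pm (mem_mask_nth _ [::] _ _ _ sm).
apply/mapP/hasP => [[i]|[k]].
  rewrite mem_enum inE => mi ->; exists (val i); first by rewrite mem_iota /=.
  by rewrite mi eqxx.
rewrite mem_iota /= => kn /andP[mk /eqP <-].
exists (Ordinal kn) => //; by rewrite mem_enum inE.
Qed.

Lemma sum_sets (R : zmodType) n (h : {set 'I_n} -> R) :
  (\sum_(S : {set 'I_n}) h S = \sum_(m <- masks n) h [set i : 'I_n | nth false m i])%R.
Proof.
rewrite -(big_map (fun m => [set i : 'I_n | nth false m i]) xpredT h).
apply: perm_big; apply: uniq_perm; first exact: index_enum_uniq.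
  rewrite map_inj_in_uniq ?uniq_masks // => m1 m2.
  rewrite !mem_masks => /eqP s1 /eqP s2 e; apply: (@eq_from_nth _ false); first by rewrite s1 s2.
  move=> i; rewrite s1 => ilt.
  by move/setP/(_ (Ordinal ilt)): e; rewrite !inE.
move=> S; rewrite mem_index_enum; symmetry; apply/mapP.
exists [seq i \in S | i <- enum 'I_n].
  by rewrite mem_masks size_map size_enum_ord.
apply/setP => i; rewrite inE (nth_map i) ?size_enum_ord //.
by rewrite nth_ord_enum.
Qed.

Section Alg.
Local Open Scope ring_scope.
Variable K : fieldType.

Lemma tensU (a b : forest) : tens << a >> << b >> = << ((a, b) : pforest) >> :> HH K.
Proof.
by rewrite /tens !msuppU1 !big_seq_fset1 !mcoeffUU mulr1 scale1r.
Qed.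

Lemma oneH : (1 : H K) = << ([::] : forest) >>.
Proof. by []. Qed.

Lemma mulH (a b : forest) : << a >> * << b >> = << a ++ b >> :> H K.
Proof. by rewrite malgM_def fgmulUU mulr1. Qed.

Lemma mulHH (a b : pforest) : << a >> * << b >> = << ((a.1 ++ b.1, a.2 ++ b.2) : pforest) >> :> HH K.
Proof. by rewrite malgM_def fgmulUU mulr1. Qed.

Lemma BplusU c : Bplus << c >> = << [:: Node c] >> :> H K.
Proof. by rewrite /Bplus msuppU1 big_seq_fset1 mcoeffUU scale1r. Qed.

Lemma IdBplus_sum (r : seq pforest) :
  IdBplus (\sum_(p <- r) << p >>) = \sum_(p <- r) << ((p.1, Bplus_f p.2) : pforest) >> :> HH K.
Proof.
pose h := fun k : pforest => << ((k.1, Bplus_f k.2) : pforest) >> : HH K.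
have E : forall u : HH K, IdBplus u = mmap (@malgC pforest K) h u.
  by move=> u; rewrite /IdBplus mmapE; apply: eq_bigr => k _; rewrite mul_malgC.
rewrite E raddf_sum; apply: eq_bigr => p _; by rewrite /= mmapU /= mul_malgC scale1r.
Qed.
End Alg.

Section PartA.
Local Open Scope ring_scope.
Variables (K : fieldType) (Delta : {linear H K -> HH K}).
Hypotheses (H1 : Delta 1 = tens 1 1)
  (HM : forall x y : H K,
      Delta (x * y) = tens x 1 * Delta y + Delta x * tens 1 y - tens x y)
  (HB : forall x : H K, Delta (Bplus x) = tens (Bplus x) 1 + IdBplus (Delta x)).

Lemma partA F : Delta << F >> = \sum_(p <- fb F) << p >>.
Proof.
elim/forest_ind: F => [|c F' IHc IHF].
  by rewrite -oneH H1 oneH tensU big_seq1.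
have DT : Delta << [:: Node c] >> =
   << (([:: Node c], [::]) : pforest) >> + \sum_(p <- fb c) << ((p.1, [:: Node p.2]) : pforest) >>.
  by rewrite -BplusU HB IHc IdBplus_sum BplusU oneH tensU.
rewrite (_ : Node c :: F' = [:: Node c] ++ F') // -mulH HM DT IHF !oneH !tensU.
rewrite big_distrr mulrDl big_distrl /= fb_cons big_cat !big_map /=.
rewrite addrCA addrAC mulHH /= subrr add0r addrC; congr (_ + _); apply: eq_bigr => p _.
  by rewrite mulHH /= cats0.
by rewrite mulHH.
Qed.
End PartA.


Local Open Scope ring_scope.

Theorem proposition12 (K : fieldType) (Delta : {linear H K -> HH K}) :
  Delta 1 = tens 1 1 ->
  (forall x y : H K,
      Delta (x * y) = tens x 1 * Delta y + Delta x * tens 1 y - tens x y) ->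
  (forall x : H K, Delta (Bplus x) = tens (Bplus x) 1 + IdBplus (Delta x)) ->
  forall F : forest,
    Delta << F >> =
    \sum_(S : {set 'I_(size (fverts F))} | is_biideal F (vset F S))
       tens << (frestr F (vset F S)) >> << (frestr F (predC (vset F S))) >>.
Proof.
move=> H1 HM HB F.
rewrite (partA _ _ H1 HM HB F).
transitivity (\sum_(m <- masks (size (fverts F)))
     (if bi (fverts F) (Pm (fverts F) m)
      then << ((frestr F (Pm (fverts F) m), frestr F (predC (Pm (fverts F) m))) : pforest) >>
      else 0 : HH K)).
  by symmetry; exact: (partB _ F (fun p => << p >>)).
symmetry; rewrite big_mkcond; etransitivity; first exact: sum_sets.
apply: eq_big_seq => m; rewrite mem_masks => /eqP sm /=.
have E := vset_mask F m sm.
rewrite is_biidealE (@bi_ext_in (fverts F) _ (Pm (fverts F) m)); last by move=> s _; rewrite E.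
rewrite (@frestr_ext_ne F _ (Pm (fverts F) m)); last by move=> s _; rewrite E.
rewrite (@frestr_ext_ne F (predC _) (predC (Pm (fverts F) m))); last by move=> s _; rewrite /= E.
by rewrite tensU.
Qed.
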